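(* Let $f:\mathbb{R}^n\to\mathbb{R}$ be differentiable and $L>0$. Then $f$ satisfies $$\|\nabla f(u_1)-\nabla f(u_2)\|\le L\|u_1-u_2\|\quad\text{for all }(u_1,u_2)\in\mathbb{R}^n\times\mathbb{R}^n$$ if and only if, for all $(u_1,u_2)\in\mathbb{R}^n\times\mathbb{R}^n$, $$f(u_1)\le f(u_2)+\Big\langle \tfrac{\nabla f(u_1)+\nabla f(u_2)}{2},\,u_1-u_2\Big\rangle+\tfrac{L}{4}\|u_1-u_2\|^2-\tfrac{1}{4L}\|\nabla f(u_1)-\nabla f(u_2)\|^2 .$$
   Context: $\|\cdot\|$ is the Euclidean norm and $\langle\cdot,\cdot\rangle$ the standard inner product on $\mathbb{R}^n$. *)

(* Defs.v *)
From HB Require Import structures.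
From mathcomp Require Import all_boot all_order all_algebra.
From mathcomp Require Import all_classical all_reals all_analysis.
Set Implicit Arguments. Unset Strict Implicit. Unset Printing Implicit Defensive.
Import Order.TTheory GRing.Theory Num.Theory.
Import numFieldNormedType.Exports.
Local Open Scope ring_scope.

Definition dotv {R : realType} {n : nat} (u v : 'rV[R]_n) : R :=
  \sum_(i < n) u ord0 i * v ord0 i.

(* Euclidean norm on R^n (the library's built-in norm on 'rV is the max norm) *)
Definition enorm {R : realType} {n : nat} (u : 'rV[R]_n) : R :=
  Num.sqrt (dotv u u).

Definition grad {R : realType} {n : nat} (f : 'rV[R]_n -> R) (u : 'rV[R]_n)
  : 'rV[R]_n :=
  \row_(i < n) ('d f u (delta_mx ord0 i : 'rV[R]_n)).

(* Main.v *)
Require Import Defs.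
From HB Require Import structures.
From mathcomp Require Import all_boot all_order all_algebra.
From mathcomp Require Import all_classical all_reals all_analysis.
From mathcomp Require Import ring lra.
Import Order.TTheory GRing.Theory Num.Theory.
Import numFieldNormedType.Exports.
Local Open Scope ring_scope.

Section S.
Context {R : realType} {n : nat}.
Implicit Types u v w : 'rV[R]_n.

Lemma dotvC u v : dotv u v = dotv v u.
Proof. by rewrite /dotv; apply: eq_bigr => i _; rewrite mulrC. Qed.
Lemma dotvDl u v w : dotv (u + v) w = dotv u w + dotv v w.
Proof. by rewrite /dotv -big_split; apply: eq_bigr => i _; rewrite !mxE mulrDl. Qed.
Lemma dotvZl (k : R) u w : dotv (k *: u) w = k * dotv u w.
Proof. by rewrite /dotv mulr_sumr; apply: eq_bigr => i _; rewrite !mxE mulrA. Qed.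
Lemma dotvNl u w : dotv (- u) w = - dotv u w.
Proof. by rewrite -scaleN1r dotvZl mulN1r. Qed.
Lemma dotvBl u v w : dotv (u - v) w = dotv u w - dotv v w.
Proof. by rewrite dotvDl dotvNl. Qed.
Lemma dotvDr u v w : dotv w (u + v) = dotv w u + dotv w v.
Proof. by rewrite dotvC dotvDl !(dotvC w). Qed.
Lemma dotvZr (k : R) u w : dotv w (k *: u) = k * dotv w u.
Proof. by rewrite dotvC dotvZl dotvC. Qed.
Lemma dotvNr u w : dotv w (- u) = - dotv w u.
Proof. by rewrite dotvC dotvNl dotvC. Qed.
Lemma dotvBr u v w : dotv w (u - v) = dotv w u - dotv w v.
Proof. by rewrite dotvDr dotvNr. Qed.
Lemma dotv_ge0 u : 0 <= dotv u u.
Proof. by rewrite /dotv; apply: sumr_ge0 => i _; rewrite -expr2 sqr_ge0. Qed.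
Lemma enorm_sq u : enorm u ^+ 2 = dotv u u.
Proof. by rewrite /enorm sqr_sqrtr // dotv_ge0. Qed.
Lemma enorm_ge0 u : 0 <= enorm u.
Proof. exact: sqrtr_ge0. Qed.

Lemma amgm u v (k : R) : 0 < k -> dotv u v <= (dotv u u / k + k * dotv v v) / 2.
Proof.
move=> k0; have := dotv_ge0 (u - k *: v).
rewrite !(dotvBl, dotvBr, dotvZl, dotvZr) (dotvC v u) => H.
set a := dotv u u in H *; set b := dotv u v in H *; set c := dotv v v in H *.
rewrite -subr_ge0.
have -> : (a / k + k * c) / 2 - b = (a - k * b - k * (b - k * c)) / k / 2.
  by field; rewrite gt_eqF //= pnatr_eq0.

by rewrite !divr_ge0 // ltW.
Qed.

Lemma dfE (f : 'rV[R]_n -> R) a v : 'd f a v = dotv (grad f a) v.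
Proof.
rewrite {1}(row_sum_delta v) linear_sum /dotv; apply: eq_bigr => i _.
by rewrite linearZ /= mxE mulrC.
Qed.

Lemma phi_derive (f : 'rV[R]_n -> R) (hf : forall u, differentiable f u) (x d : 'rV[R]_n) (t : R) :
  is_derive t (1:R) (fun s : R => f (s *: d + x)) (dotv (grad f (t *: d + x)) d).
Proof.
have eqfun : (fun h : R => h^-1 *: ((fun s : R => f (s *: d + x)) (h *: 1 + t)
      - (fun s : R => f (s *: d + x)) t)) =
    (fun h : R => h^-1 *: (f (h *: d + (t *: d + x)) - f (t *: d + x))).
  by apply: funext => h /=; rewrite [h *: 1]mulr1 scalerDl addrA.
have dv : derivable f (t *: d + x) d by apply: diff_derivable.
have dphi : derivable (fun s : R => f (s *: d + x)) t 1.
  by rewrite /derivable eqfun.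
apply: DeriveDef => //.
have -> : 'D_1 (fun s : R => f (s *: d + x)) t = 'D_d f (t *: d + x).
  by rewrite /derive eqfun.
by rewrite deriveE // dfE.
Qed.

Lemma poly_derive (a b t : R) :
  is_derive t (1:R) (fun s : R => a * s + b * (s * s)) (a + b * (2 * t)).
Proof.
have -> : (fun s : R => a * s + b * (s * s)) = (a \*: id) + (b \*: (id * id)).
  by apply: funext => s.
apply: is_derive_eq.
by rewrite /= [a%:A]mulr1 [t%:A]mulr1 /GRing.scale /=; ring.
Qed.

Lemma mvt01 (psi dpsi : R -> R) :
  (forall t, is_derive t (1:R) psi (dpsi t)) ->
  exists2 c, 0 < c & psi 1 - psi 0 = dpsi c.
Proof.
move=> hd.
case: (MVT ltr01 (fun x _ => hd x)).
  apply: continuous_subspaceT => s.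
  apply: differentiable_continuous; apply/derivable1_diffP.
  by have [] := hd s.
move=> c cin E.
by exists c; [rewrite (itvP cin) | rewrite E subr0 mulr1].
Qed.

Lemma lip_dot (f : 'rV[R]_n -> R) (L : R) (hL : 0 < L)
  (HL : forall u1 u2 : 'rV[R]_n,
      enorm (grad f u1 - grad f u2) <= L * enorm (u1 - u2))
  (x d : 'rV[R]_n) (c : R) (c0 : 0 < c) :
  dotv (grad f (c *: d + x) - grad f x) d <= L * c * dotv d d /\
  - dotv (grad f (c *: d + x) - grad f x) d <= L * c * dotv d d.
Proof.
set D := grad f (c *: d + x) - grad f x.
have h := HL (c *: d + x) x; rewrite addrK -/D in h.
have sq : dotv D D <= (L * c) * (L * c) * dotv d d.
  rewrite -enorm_sq expr2.
  have e : (L * c) * (L * c) * dotv d d = (L * enorm (c *: d)) * (L * enorm (c *: d)).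
    have : enorm (c *: d) * enorm (c *: d) = c * c * dotv d d.
      by rewrite -expr2 enorm_sq dotvZl dotvZr mulrA.
    move=> E; transitivity ((L * L) * (enorm (c *: d) * enorm (c *: d))); last by ring.
    rewrite E; ring.

  by rewrite e ler_pM // enorm_ge0.
have kp : 0 < L * c by rewrite mulr_gt0.
have q : dotv D D / (L * c) <= L * c * dotv d d.
  by rewrite ler_pdivrMr // mulrAC.
split.
  have := amgm D d (L * c) kp; lra.

have := amgm (- D) d (L * c) kp; rewrite !(dotvNl, dotvNr) opprK => H.
lra.
Qed.

Lemma descent (f : 'rV[R]_n -> R) (hf : forall u, differentiable f u)
  (L : R) (hL : 0 < L)
  (HL : forall u1 u2 : 'rV[R]_n,
      enorm (grad f u1 - grad f u2) <= L * enorm (u1 - u2))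
  (x d : 'rV[R]_n) :
  f (d + x) <= f x + dotv (grad f x) d + L / 2 * dotv d d /\
  f x + dotv (grad f x) d - L / 2 * dotv d d <= f (d + x).
Proof.
set K := dotv (grad f x) d.
have key (C : R) : exists2 c, 0 < c &
   (f (d + x) - (K + C)) - f x = dotv (grad f (c *: d + x) - grad f x) d - C * (2 * c).
  have hd t : is_derive t (1:R) ((fun s : R => f (s *: d + x)) - (fun s : R => K * s + C * (s * s)))
      (dotv (grad f (t *: d + x)) d - (K + C * (2 * t))).
    by apply: is_deriveB; [apply: phi_derive | apply: poly_derive].
  have [c c0 E] := mvt01 _ _ hd.
  exists c => //.
  have E' : f (1 *: d + x) - (K * 1 + C * (1 * 1)) - (f (0 *: d + x) - (K * 0 + C * (0 * 0)))
     = dotv (grad f (c *: d + x)) d - (K + C * (2 * c)) := E.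
  move: E'; rewrite scale1r scale0r add0r !mulr1 !mulr0 addr0 subr0 => ->.
  by rewrite dotvBl opprD addrA.
have e2 c : L / 2 * dotv d d * (2 * c) = L * c * dotv d d by field.
split.
  have [c c0 E] := key (L / 2 * dotv d d).
  have [h1 _] := @lip_dot f L hL HL x d c c0.
  move: E; rewrite e2 => E.
  have : f (d + x) - (K + L / 2 * dotv d d) - f x <= 0.
    by rewrite E subr_le0.
  lra.
have [c c0 E] := key (- (L / 2 * dotv d d)).
have [_ h2] := @lip_dot f L hL HL x d c c0.
move: E; rewrite mulNr e2 => E.
have : 0 <= f (d + x) - (K + - (L / 2 * dotv d d)) - f x.
  by rewrite E opprK; lra.
lra.
Qed.

Lemma alg_id (g1 g2 u1 u2 : 'rV[R]_n) (F1 F2 Fz L : R) : L != 0 ->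
  F2 + dotv (2^-1 *: (g1 + g2)) (u1 - u2) + L / 4 * dotv (u1 - u2) (u1 - u2) -
  (4 * L)^-1 * dotv (g1 - g2) (g1 - g2) - F1 =
  Fz - (F1 + dotv g1 ((- (2 * L)^-1) *: ((g2 - g1) + L *: (u2 - u1)) + (u2 - u1)) -
   L / 2 * dotv ((- (2 * L)^-1) *: ((g2 - g1) + L *: (u2 - u1)) + (u2 - u1))
                ((- (2 * L)^-1) *: ((g2 - g1) + L *: (u2 - u1)) + (u2 - u1))) +
  (F2 + dotv g2 ((- (2 * L)^-1) *: ((g2 - g1) + L *: (u2 - u1)))
    + L / 2 * dotv ((- (2 * L)^-1) *: ((g2 - g1) + L *: (u2 - u1)))
                   ((- (2 * L)^-1) *: ((g2 - g1) + L *: (u2 - u1))) - Fz).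
Proof.
move=> L0.
rewrite !(dotvDl, dotvDr, dotvNl, dotvNr, dotvZl, dotvZr).
rewrite ?(dotvC g2 g1) ?(dotvC u1 g1) ?(dotvC u2 g1) ?(dotvC u1 g2) ?(dotvC u2 g2) ?(dotvC u2 u1).
by field; rewrite L0 /= ?pnatr_eq0.
Qed.

Lemma alg_id2 (g1 g2 u1 u2 : 'rV[R]_n) (F1 F2 L : R) : L != 0 ->
  L ^+ 2 * enorm (u1 - u2) ^+ 2 - enorm (g1 - g2) ^+ 2 =
  (2 * L) * ((F2 + dotv (2^-1 *: (g1 + g2)) (u1 - u2) + L / 4 * enorm (u1 - u2) ^+ 2 -
     (4 * L)^-1 * enorm (g1 - g2) ^+ 2 - F1) +
   (F1 + dotv (2^-1 *: (g2 + g1)) (u2 - u1) + L / 4 * enorm (u2 - u1) ^+ 2 -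
     (4 * L)^-1 * enorm (g2 - g1) ^+ 2 - F2)).
Proof.
move=> L0; rewrite !enorm_sq.
rewrite !(dotvDl, dotvDr, dotvNl, dotvNr, dotvZl, dotvZr).
rewrite ?(dotvC g2 g1) ?(dotvC u1 g1) ?(dotvC u2 g1) ?(dotvC u1 g2) ?(dotvC u2 g2) ?(dotvC u2 u1).
by field; rewrite L0 /= ?pnatr_eq0.
Qed.

Lemma comb (a b c d e g : R) : a <= b -> c <= d -> g - e = (b - a) + (d - c) -> e <= g.
Proof. move=> h1 h2 E; rewrite -subr_ge0 E; lra. Qed.

Lemma comb2 {k a b c d X Y : R} : 0 < k -> a <= b -> c <= d ->
  Y - X = k * ((b - a) + (d - c)) -> X <= Y.
Proof.
move=> k0 h1 h2 E; rewrite -subr_ge0 E; apply: mulr_ge0; [exact: ltW | lra].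
Qed.
End S.

Theorem proposition2p1 (R : realType) (n : nat) (f : 'rV[R]_n -> R) (L : R)
    (hf : forall u : 'rV[R]_n, differentiable f u) (hL : 0 < L) :
  (forall u1 u2 : 'rV[R]_n,
      enorm (grad f u1 - grad f u2) <= L * enorm (u1 - u2)) <->
  (forall u1 u2 : 'rV[R]_n,
      f u1 <= f u2 + dotv ((2%:R)^-1 *: (grad f u1 + grad f u2)) (u1 - u2)
              + L / 4%:R * enorm (u1 - u2) ^+ 2
              - (4%:R * L)^-1 * enorm (grad f u1 - grad f u2) ^+ 2).
Proof.
have L0 : L != 0 by rewrite gt_eqF.
split.
- move=> HL u1 u2.
  set g1 := grad f u1; set g2 := grad f u2.
  set w : 'rV[R]_n := (- (2 * L)^-1) *: ((g2 - g1) + L *: (u2 - u1)).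
  have [Hup _] := @descent R n f hf L hL HL u2 w.
  have [_ Hlo] := @descent R n f hf L hL HL u1 (w + (u2 - u1)).
  have ez : w + (u2 - u1) + u1 = w + u2 by rewrite -addrA subrK.
  rewrite ez -/g1 in Hlo.
  rewrite -/g2 in Hup.
  eapply comb; [exact: Hlo | exact: Hup | ].

  rewrite !enorm_sq.
  exact: (alg_id g1 g2 u1 u2 (f u1) (f u2) (f (w + u2)) L L0).
- move=> H u1 u2.
  have h1 := H u1 u2; have h2 := H u2 u1.
  have hsq : enorm (grad f u1 - grad f u2) ^+ 2
      <= L ^+ 2 * enorm (u1 - u2) ^+ 2.
    have kp : 0 < 2 * L by rewrite mulr_gt0.
    exact: (comb2 kp h1 h2 (alg_id2 (grad f u1) (grad f u2) u1 u2 (f u1) (f u2) L L0)).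
  have hx : enorm (grad f u1 - grad f u2) \in Num.nneg by rewrite nnegrE enorm_ge0.
  have hy : L * enorm (u1 - u2) \in Num.nneg.
    by rewrite nnegrE mulr_ge0 ?enorm_ge0 ?ltW.
  by rewrite -(ler_sqr hx hy) exprMn.
Qed.
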